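(* Let $\kappa$ be a regular uncountable cardinal, $\vec C$ a $C$-sequence over $\kappa$ and $\rho_0$ the corresponding walks function. For all $\alpha<\beta<\kappa$ such that $\rho_{0\alpha}$ and $\rho_{0\beta}$ are incomparable (neither is a subset of the other), $\Delta(\rho_{0\alpha},\rho_{0\beta})\notin V(\vec C)$.
   Context: A $C$-sequence over $\kappa$ is $\langle C_\delta\mid\delta<\kappa\rangle$, each $C_\delta$ a closed subset of $\delta$ with $\sup(C_\delta)=\sup(\delta)$. Walks: $\mathrm{Tr}(\beta,\gamma)(0)=\gamma$, $\mathrm{Tr}(\beta,\gamma)(n)=\min(C_{\mathrm{Tr}(\beta,\gamma)(n-1)}\setminus\beta)$ if $\mathrm{Tr}(\beta,\gamma)(n-1)>\beta$, else $\beta$; $\rho_2(\beta,\gamma)$ least $l$ with $\mathrm{Tr}(\beta,\gamma)(l)=\beta$; $\rho_0(\beta,\gamma)=\langle\mathrm{otp}(C_{\mathrm{Tr}(\beta,\gamma)(n)}\cap\beta)\mid n<\rho_2(\beta,\gamma)\rangle$. The fiber $\rho_{0\delta}:\delta\to{}^{<\omega}\kappa$ is $\rho_{0\delta}(\xi)=\rho_0(\xi,\delta)$. For functions $f,g$ with ordinal domains, $\Delta(f,g)=\min\{\mathrm{dom}(f),\mathrm{dom}(g),\delta\mid\delta\in\mathrm{dom}(f)\cap\mathrm{dom}(g),\ f(\delta)\ne g(\delta)\}$. $\mathrm{acc}(\kappa)$ is the set of nonzero limit ordinals below $\kappa$, and $V(\vec C)=\{\delta\in\mathrm{acc}(\kappa)\mid\forall\alpha\in(\delta,\kappa)\,\forall\epsilon<\delta\,[C_\delta\cap[\epsilon,\delta)\ne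 C_\alpha\cap[\epsilon,\delta)]\}$. *)

(* Defs.v *)
(* kappa is modelled abstractly as a type K with a strict
   well-order lt whose order type is a regular uncountable cardinal. *)
From Stdlib Require Import List Arith ClassicalEpsilon.
Import ListNotations.
Set Implicit Arguments.

Section Walks.
Variable K : Type.
Variable lt : K -> K -> Prop.

Definition le (x y : K) : Prop := lt x y \/ x = y.

Definition strict_well_order : Prop :=
  (forall x, ~ lt x x) /\
  (forall x y z, lt x y -> lt y z -> lt x z) /\
  (forall x y, lt x y \/ x = y \/ lt y x) /\
  well_founded lt.

Definition segment (delta : K) : Type := { xi : K | lt xi delta }.

Definition injective_fun (A B : Type) (f : A -> B) : Prop :=
  forall x y, f x = f y -> x = y.

(* K is an initial ordinal: it does not inject into any proper initial segment *)
Definition is_cardinal : Prop :=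
  forall delta : K, ~ exists f : K -> segment delta, injective_fun f.

Definition is_regular : Prop :=
  forall (delta : K) (f : segment delta -> K), exists gamma, forall x, lt (f x) gamma.

Definition is_uncountable : Prop := ~ exists f : K -> nat, injective_fun f.

Definition regular_uncountable_cardinal : Prop :=
  strict_well_order /\ is_cardinal /\ is_regular /\ is_uncountable.

Definition closed_subset (X : K -> Prop) (delta : K) : Prop :=
  (forall x, X x -> lt x delta) /\
  (forall gamma, lt gamma delta ->
     (exists x, X x /\ lt x gamma) ->
     (forall xi, lt xi gamma -> exists x, X x /\ lt xi x /\ lt x gamma) ->
     X gamma).

Definition same_sup (X : K -> Prop) (delta : K) : Prop :=
  forall gamma, (forall x, X x -> le x gamma) <-> (forall xi, lt xi delta -> le xi gamma).

Definition C_sequence (C : K -> K -> Prop) : Prop :=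
  forall delta, closed_subset (C delta) delta /\ same_sup (C delta) delta.

(* least element of P, or the default d if P is empty *)
Definition min_or (d : K) (P : K -> Prop) : K :=
  epsilon (inhabits d)
    (fun m => (P m /\ forall x, P x -> ~ lt x m) \/ ((~ exists x, P x) /\ m = d)).

(* order type of X (a set of ordinals), d is an irrelevant default *)
Definition otp (d : K) (X : K -> Prop) : K :=
  epsilon (inhabits d)
    (fun delta => exists f : K -> K,
        (forall xi, lt xi delta -> X (f xi)) /\
        (forall xi eta, lt xi delta -> lt eta delta -> lt xi eta -> lt (f xi) (f eta)) /\
        (forall x, X x -> exists xi, lt xi delta /\ f xi = x)).

Variable C : K -> K -> Prop.

Fixpoint Tr (beta gamma : K) (n : nat) : K :=
  match n with
  | O => gamma
  | S m => let t := Tr beta gamma m in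
           if excluded_middle_informative (lt beta t)
           then min_or beta (fun x => C t x /\ le beta x)
           else beta
  end.

Definition rho2 (beta gamma : K) : nat :=
  epsilon (inhabits 0)
    (fun l => Tr beta gamma l = beta /\ forall m, m < l -> Tr beta gamma m <> beta).

Definition rho0 (beta gamma : K) : list K :=
  map (fun n => otp beta (fun x => C (Tr beta gamma n) x /\ lt x beta))
      (seq 0 (rho2 beta gamma)).

(* the fiber rho_{0 delta} : delta -> K^{<omega}; its domain is delta *)
Definition rho0_fiber (delta : K) : K -> list K := fun xi => rho0 xi delta.

(* a function with ordinal domain: (domain, values) *)
Definition fun_subset (a : K) (f : K -> list K) (b : K) (g : K -> list K) : Prop :=
  forall xi, lt xi a -> lt xi b /\ f xi = g xi.

Definition Delta (a : K) (f : K -> list K) (b : K) (g : K -> list K) : K :=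
  min_or a (fun x => x = a \/ x = b \/ (lt x a /\ lt x b /\ f x <> g x)).

Definition nonzero_limit (delta : K) : Prop :=
  (exists xi, lt xi delta) /\
  (forall xi, lt xi delta -> exists eta, lt xi eta /\ lt eta delta).

Definition in_V (delta : K) : Prop :=
  nonzero_limit delta /\
  forall alpha, lt delta alpha ->
  forall eps, lt eps delta ->
    ~ (forall xi, le eps xi -> lt xi delta -> (C delta xi <-> C alpha xi)).

End Walks.

(* Main.v *)
Require Import Defs.
From Stdlib Require Import List Arith Lia ClassicalEpsilon Classical ProofIrrelevance FunctionalExtensionality.
Import ListNotations.
Set Implicit Arguments.
Unset Strict Implicit.

Lemma W_irr (K : Type) (lt : K -> K -> Prop) (W : strict_well_order lt) x : ~ lt x x.
Proof. destruct W as [H _]. apply H. Qed.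
Lemma W_trans (K : Type) (lt : K -> K -> Prop) (W : strict_well_order lt) x y z :
  lt x y -> lt y z -> lt x z.
Proof. destruct W as [_ [H _]]. apply H. Qed.
Lemma W_trich (K : Type) (lt : K -> K -> Prop) (W : strict_well_order lt) x y :
  lt x y \/ x = y \/ lt y x.
Proof. destruct W as [_ [_ [H _]]]. apply H. Qed.
Lemma W_wf (K : Type) (lt : K -> K -> Prop) (W : strict_well_order lt) : well_founded lt.
Proof. destruct W as [_ [_ [_ H]]]. apply H. Qed.

Lemma W_asym (K : Type) (lt : K -> K -> Prop) (W : strict_well_order lt) x y :
  lt x y -> ~ lt y x.
Proof. intros H1 H2. exact (W_irr W (W_trans W H1 H2)). Qed.

Lemma W_min (K : Type) (lt : K -> K -> Prop) (W : strict_well_order lt) (P : K -> Prop) :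
  (exists x, P x) -> exists m, P m /\ forall x, P x -> ~ lt x m.
Proof.
  intros [x Hx]. apply NNPP; intro Hn.
  assert (forall y, ~ P y) as Hall.
  { intro y. induction y as [y IH] using (well_founded_ind (W_wf W)).
    intro Hy. apply Hn. exists y. split; auto. intros z Hz Hzy. exact (IH z Hzy Hz). }
  exact (Hall x Hx).
Qed.

Lemma min_or_spec (K : Type) (lt : K -> K -> Prop) (W : strict_well_order lt) d (P : K -> Prop) :
  (exists x, P x) -> P (min_or lt d P) /\ forall x, P x -> ~ lt x (min_or lt d P).
Proof.
  intros Hex. unfold min_or.
  pose proof (epsilon_spec (inhabits d)
    (fun m => (P m /\ forall x, P x -> ~ lt x m) \/ ((~ exists x, P x) /\ m = d))) as H.
  destruct H as [H|[H _]]; [| exact H | exfalso; exact (H Hex)].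
  destruct (W_min W Hex) as [m Hm]. exists m. left. exact Hm.
Qed.

Lemma min_or_empty (K : Type) (lt : K -> K -> Prop) d (P : K -> Prop) :
  (~ exists x, P x) -> min_or lt d P = d.
Proof.
  intros Hn. unfold min_or.
  pose proof (epsilon_spec (inhabits d)
    (fun m => (P m /\ forall x, P x -> ~ lt x m) \/ ((~ exists x, P x) /\ m = d))) as H.
  destruct H as [[H _]|[_ H]]; [| exfalso; apply Hn; eauto | exact H].
  exists d. right. auto.
Qed.

Lemma min_or_eq (K : Type) (lt : K -> K -> Prop) (W : strict_well_order lt) d (P : K -> Prop) m :
  P m -> (forall x, P x -> ~ lt x m) -> min_or lt d P = m.
Proof.
  intros Hm Hmin. destruct (min_or_spec W d (ex_intro P m Hm)) as [H1 H2].
  destruct (W_trich W (min_or lt d P) m) as [h|[h|h]]; auto.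
  - exfalso; exact (Hmin _ H1 h).
  - exfalso; exact (H2 _ Hm h).
Qed.

Lemma min_or_ext (K : Type) (lt : K -> K -> Prop) (W : strict_well_order lt) d d' (P P' : K -> Prop) :
  (forall x, P x <-> P' x) -> (exists x, P x) -> min_or lt d P = min_or lt d' P'.
Proof.
  intros He Hex. destruct (min_or_spec W d Hex) as [H1 H2].
  symmetry. apply min_or_eq; auto.
  - apply He; auto.
  - intros x Hx. apply H2. apply He; auto.
Qed.

Definition Pot (K : Type) (lt : K -> K -> Prop) (X : K -> Prop) (delta : K) : Prop :=
  exists f : K -> K,
        (forall xi, lt xi delta -> X (f xi)) /\
        (forall xi eta, lt xi delta -> lt eta delta -> lt xi eta -> lt (f xi) (f eta)) /\
        (forall x, X x -> exists xi, lt xi delta /\ f xi = x).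

Lemma enum_least (K : Type) (lt : K -> K -> Prop) (W : strict_well_order lt) (A : K -> Prop) g f :
  (forall xi, lt xi g -> A (f xi)) ->
  (forall xi eta, lt xi g -> lt eta g -> lt xi eta -> lt (f xi) (f eta)) ->
  (forall x, A x -> exists xi, lt xi g /\ f xi = x) ->
  forall eta a, lt eta g -> A a -> (forall z, lt z eta -> lt (f z) a) -> ~ lt a (f eta).
Proof.
  intros H1 H2 H3 eta a Heta Ha Hb Hlt.
  destruct (H3 a Ha) as [th [Hth Hfa]]. subst a.
  destruct (W_trich W th eta) as [h|[h|h]].
  - pose proof (Hb th h). exact (W_irr W H).
  - subst. exact (W_irr W Hlt).
  - pose proof (H2 eta th Heta Hth h). exact (W_asym W H Hlt).
Qed.

Lemma enum_agree (K : Type) (lt : K -> K -> Prop) (W : strict_well_order lt) (A B : K -> Prop) g g' f f' :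
  (forall xi, lt xi g -> A (f xi)) ->
  (forall xi eta, lt xi g -> lt eta g -> lt xi eta -> lt (f xi) (f eta)) ->
  (forall x, A x -> exists xi, lt xi g /\ f xi = x) ->
  (forall xi, lt xi g' -> B (f' xi)) ->
  (forall xi eta, lt xi g' -> lt eta g' -> lt xi eta -> lt (f' xi) (f' eta)) ->
  (forall x, B x -> exists xi, lt xi g' /\ f' xi = x) ->
  (forall x, A x -> B x) ->
  (forall b a, B b -> A a -> lt b a -> A b) ->
  forall eta, lt eta g -> lt eta g' -> f eta = f' eta.
Proof.
  intros H1 H2 H3 H1' H2' H3' Hsub Hini eta.
  induction eta as [eta IH] using (well_founded_ind (W_wf W)).
  intros Hg Hg'.
  assert (Hz : forall z, lt z eta -> f z = f' z).
  { intros z Hz. apply IH; auto; eapply W_trans; eauto. }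
  assert (N1 : ~ lt (f eta) (f' eta)).
  { apply (@enum_least _ _ W B g' f' H1' H2' H3' eta (f eta) Hg'); auto.
    intros z Hzl. rewrite <- (Hz z Hzl). apply H2; auto. eapply W_trans; eauto. }
  assert (HA : A (f' eta)).
  { destruct (W_trich W (f' eta) (f eta)) as [h|[h|h]].
    - apply (Hini _ (f eta)); auto.
    - rewrite h; auto.
    - contradiction. }
  assert (N2 : ~ lt (f' eta) (f eta)).
  { apply (@enum_least _ _ W A g f H1 H2 H3 eta (f' eta) Hg); auto.
    intros z Hzl. rewrite (Hz z Hzl). apply H2'; auto. eapply W_trans; eauto. }
  destruct (W_trich W (f eta) (f' eta)) as [h|[h|h]]; tauto.
Qed.

Lemma Pot_unique (K : Type) (lt : K -> K -> Prop) (W : strict_well_order lt) (A : K -> Prop) g g' :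
  Pot lt A g -> Pot lt A g' -> g = g'.
Proof.
  intros [f [H1 [H2 H3]]] [f' [H1' [H2' H3']]].
  assert (Hag := @enum_agree _ _ W A A g g' f f' H1 H2 H3 H1' H2' H3' (fun x h => h) (fun b a hb _ _ => hb)).
  destruct (W_trich W g g') as [h|[h|h]]; auto; exfalso.
  - destruct (H3 _ (H1' g h)) as [th [Hth Heq]].
    rewrite (Hag th Hth (W_trans W Hth h)) in Heq.
    pose proof (H2' th g (W_trans W Hth h) h Hth). rewrite Heq in H. exact (W_irr W H).
  - destruct (H3' _ (H1 g' h)) as [th [Hth Heq]].
    rewrite <- (Hag th (W_trans W Hth h) Hth) in Heq.
    pose proof (H2 th g' (W_trans W Hth h) h Hth). rewrite Heq in H. exact (W_irr W H).
Qed.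

Lemma Pot_ext (K : Type) (lt : K -> K -> Prop) (X Y : K -> Prop) g :
  (forall x, X x <-> Y x) -> Pot lt X g -> Pot lt Y g.
Proof.
  intros He [f [H1 [H2 H3]]]. exists f. repeat split; auto.
  - intros; apply He; auto.
  - intros x Hx. apply H3. apply He; auto.
Qed.
Lemma Pot_exists (K : Type) (lt : K -> K -> Prop) (W : strict_well_order lt)
  (Hcard : is_cardinal lt) (X : K -> Prop) (delta : K) :
  (forall x, X x -> lt x delta) -> exists g, Pot lt X g.
Proof.
  intros Hb.
  set (F := fun (x : K) (rec : forall y, lt y x -> K) =>
        min_or lt delta (fun a => X a /\ forall y (p : lt y x), lt (rec y p) a)).
  set (e := Fix (W_wf W) (fun _ => K) F).
  assert (He : forall x, e x = min_or lt delta (fun a => X a /\ forall y, lt y x -> lt (e y) a)).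
  { intro x. unfold e at 1. rewrite Fix_eq.
    - unfold F. reflexivity.
    - intros x0 f g Hfg. unfold F.
      assert (f = g) as ->; [|reflexivity].
      apply functional_extensionality_dep. intro y.
      apply functional_extensionality_dep. intro p. apply Hfg. }
  set (good := fun x => X (e x)).
  assert (Hne : forall x, good x -> exists a, X a /\ forall y, lt y x -> lt (e y) a).
  { intros x Hg. apply NNPP. intro Hn. unfold good in Hg. rewrite He in Hg.
    rewrite min_or_empty in Hg; auto. exact (W_irr W (Hb _ Hg)). }
  assert (Hinc : forall x y, good x -> lt y x -> lt (e y) (e x)).
  { intros x y Hg Hyx. destruct (min_or_spec W delta (Hne x Hg)) as [[_ H] _].
    rewrite (He x). apply H. auto. }
  assert (Hdown : forall x y, good x -> lt y x -> good y).
  { intros x y Hg Hyx. unfold good. rewrite He.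
    assert (Hex : exists a, X a /\ forall z, lt z y -> lt (e z) a).
    { exists (e x). split; auto. intros z Hz. apply Hinc; auto. eapply W_trans; eauto. }
    apply (min_or_spec W delta Hex). }
  assert (Hng : exists x, ~ good x).
  { apply NNPP. intro Hn. apply (Hcard delta).
    assert (Hall : forall x, good x) by (intro x; apply NNPP; intro; apply Hn; eauto).
    exists (fun k => exist _ (e k) (Hb _ (Hall k))).
    intros x y Hxy. injection Hxy. intro Hexy.
    destruct (W_trich W x y) as [h|[h|h]]; auto.
    - pose proof (Hinc y x (Hall y) h). rewrite Hexy in H. exfalso; exact (W_irr W H).
    - pose proof (Hinc x y (Hall x) h). rewrite Hexy in H. exfalso; exact (W_irr W H). }
  destruct (W_min W Hng) as [g [Hg Hgmin]].
  assert (Hlt : forall y, lt y g -> good y).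
  { intros y Hy. apply NNPP. intro Hn. exact (Hgmin y Hn Hy). }
  exists g, e. split; [|split].
  - intros xi Hxi. apply Hlt; auto.
  - intros xi eta Hxi Heta H. apply Hinc; auto.
  - intros a Ha.
    assert (Hex : exists y, lt y g /\ ~ lt (e y) a).
    { apply NNPP. intro Hn. apply Hg. unfold good. rewrite He.
      assert (Hex : exists b, X b /\ forall z, lt z g -> lt (e z) b).
      { exists a. split; auto. intros z Hz. apply NNPP. intro. apply Hn. eauto. }
      apply (min_or_spec W delta Hex). }
    destruct (W_min W Hex) as [y0 [[Hy0 Hny0] Hy0min]].
    exists y0. split; auto.
    assert (Hbelow : forall z, lt z y0 -> lt (e z) a).
    { intros z Hz. apply NNPP. intro Hn. apply (Hy0min z); auto. split; auto.
      eapply W_trans; eauto. }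
    assert (Hex2 : exists b, X b /\ forall z, lt z y0 -> lt (e z) b) by eauto.
    destruct (min_or_spec W delta Hex2) as [_ Hm].
    assert (N : ~ lt a (e y0)) by (rewrite He; apply Hm; auto).
    destruct (W_trich W (e y0) a) as [h|[h|h]]; tauto.
Qed.

Lemma otp_spec (K : Type) (lt : K -> K -> Prop) (W : strict_well_order lt)
  (Hcard : is_cardinal lt) (X : K -> Prop) (delta d : K) :
  (forall x, X x -> lt x delta) -> Pot lt X (otp lt d X).
Proof.
  intros Hb. unfold otp. apply (epsilon_spec (inhabits d) (Pot lt X)).
  eapply Pot_exists; eauto.
Qed.

Lemma otp_eq (K : Type) (lt : K -> K -> Prop) (W : strict_well_order lt)
  (Hcard : is_cardinal lt) (X Y : K -> Prop) (delta d d' : K) :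
  (forall x, X x -> lt x delta) -> (forall x, X x <-> Y x) -> otp lt d X = otp lt d' Y.
Proof.
  intros Hb He.
  assert (HbY : forall x, Y x -> lt x delta) by (intros x Hx; apply Hb, He, Hx).
  apply (Pot_unique W (A:=Y)).
  - apply (Pot_ext He). eapply otp_spec; eauto.
  - eapply otp_spec; eauto.
Qed.

Lemma otp_distinct (K : Type) (lt : K -> K -> Prop) (W : strict_well_order lt)
  (Hcard : is_cardinal lt) (X : K -> Prop) (xi xi' : K) :
  X xi -> X xi' -> lt xi xi' ->
  otp lt xi (fun x => X x /\ lt x xi) <> otp lt xi' (fun x => X x /\ lt x xi').
Proof.
  intros Hx Hx' Hlt Heq.
  pose proof (@otp_spec _ _ W Hcard (fun x => X x /\ lt x xi) xi xi (fun x h => proj2 h)) as P1.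
  pose proof (@otp_spec _ _ W Hcard (fun x => X x /\ lt x xi') xi' xi' (fun x h => proj2 h)) as P2.
  rewrite Heq in P1. set (g := otp lt xi' _) in P1, P2. clearbody g.
  destruct P1 as [f [H1 [H2 H3]]]. destruct P2 as [f' [H1' [H2' H3']]].
  assert (Hag := @enum_agree _ _ W (fun x => X x /\ lt x xi) (fun x => X x /\ lt x xi') g g f f'
     H1 H2 H3 H1' H2' H3').
  destruct (H3' xi (conj Hx Hlt)) as [th [Hth Hfth]].
  rewrite <- Hag in Hfth; auto.
  - destruct (H1 th Hth) as [_ Hc]. rewrite Hfth in Hc. exact (W_irr W Hc).
  - intros x [h1 h2]. split; auto. eapply W_trans; eauto.
  - intros b a [hb1 hb2] [ha1 ha2] hba. split; auto. eapply W_trans; eauto.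
Qed.
Lemma otp_tail (K : Type) (lt : K -> K -> Prop) (W : strict_well_order lt)
  (Hcard : is_cardinal lt) (X Y : K -> Prop) (delta xi0 d1 d2 d3 d4 : K) :
  (forall x, X x -> lt x delta) -> (forall x, Y x -> lt x delta) -> X xi0 -> Y xi0 ->
  (forall x, ~ lt x xi0 -> (X x <-> Y x)) ->
  otp lt d1 (fun x => X x /\ lt x xi0) = otp lt d2 (fun x => Y x /\ lt x xi0) ->
  otp lt d3 X = otp lt d4 Y.
Proof.
  intros HbX HbY HX0 HY0 Hag Heq.
  pose proof (@otp_spec _ _ W Hcard (fun x => X x /\ lt x xi0) xi0 d1 (fun x h => proj2 h)) as P1.
  pose proof (@otp_spec _ _ W Hcard (fun x => Y x /\ lt x xi0) xi0 d2 (fun x h => proj2 h)) as P2.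
  rewrite Heq in P1. set (g0 := otp lt d2 _) in P1, P2. clearbody g0.
  pose proof (@otp_spec _ _ W Hcard X delta d3 HbX) as PX.
  set (gx := otp lt d3 X) in PX |- *. clearbody gx.
  destruct PX as [F [F1 [F2 F3]]].
  destruct P2 as [g [G1 [G2 G3]]].
  destruct (F3 xi0 HX0) as [eta0 [Heta0 HF0]].
  assert (Hfl : forall z, lt z gx -> (lt z eta0 <-> lt (F z) xi0)).
  { intros z Hz. split; intro h.
    - rewrite <- HF0. apply F2; auto.
    - destruct (W_trich W z eta0) as [h'|[h'|h']]; auto.
      + rewrite h', HF0 in h. exfalso; exact (W_irr W h).
      + exfalso. pose proof (F2 _ _ Heta0 Hz h'). rewrite HF0 in H. exact (W_asym W H h). }
  assert (Pe : Pot lt (fun x => X x /\ lt x xi0) eta0).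
  { exists F. split; [|split].
    - intros z Hz. assert (lt z gx) by (eapply W_trans; eauto). split; [apply F1; auto|]. apply (proj1 (Hfl z H)); auto.
    - intros a b Ha Hb Hab. apply F2; auto; [apply (W_trans W Ha Heta0) | apply (W_trans W Hb Heta0)].
    - intros x [Hx1 Hx2]. destruct (F3 x Hx1) as [th [Hth Hfth]]. exists th. split; auto.
      apply Hfl; auto. rewrite Hfth; auto. }
  assert (Hge : g0 = eta0) by (apply (Pot_unique W P1 Pe)). subst g0.
  assert (PY : Pot lt Y gx).
  { exists (fun z => if excluded_middle_informative (lt z eta0) then g z else F z).
    split; [|split].
    - intros z Hz. destruct (excluded_middle_informative (lt z eta0)) as [h|h].
      + apply (G1 z h).
      + assert (~ lt (F z) xi0) by (intro; apply h; apply Hfl; auto).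
        apply Hag; auto.
    - intros a b Ha Hb Hab.
      destruct (excluded_middle_informative (lt a eta0)) as [h1|h1];
      destruct (excluded_middle_informative (lt b eta0)) as [h2|h2].
      + apply G2; auto.
      + destruct (G1 a h1) as [_ Hga].
        destruct (W_trich W (F b) xi0) as [h|[h|h]].
        * exfalso; apply h2; apply Hfl; auto.
        * rewrite h; auto.
        * eapply W_trans; eauto.
      + exfalso; apply h1; eapply W_trans; eauto.
      + apply F2; auto.
    - intros y Hy. destruct (classic (lt y xi0)) as [h|h].
      + destruct (G3 y (conj Hy h)) as [th [Hth Hgth]]. exists th. split.
        * eapply W_trans; eauto.
        * destruct (excluded_middle_informative (lt th eta0)) as [_|n]; [auto| contradiction].
      + assert (HXy : X y) by (apply Hag; auto).
        destruct (F3 y HXy) as [th [Hth Hfth]]. exists th. split; auto.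
        destruct (excluded_middle_informative (lt th eta0)) as [h'|n]; auto.
        exfalso. apply h. rewrite <- Hfth. apply Hfl; auto. }
  apply (Pot_unique W PY). eapply otp_spec; eauto.
Qed.
Lemma C_lt (K : Type) (lt : K -> K -> Prop) (C : K -> K -> Prop) (HC : C_sequence lt C) t x :
  C t x -> lt x t.
Proof. intro H. exact (proj1 (proj1 (HC t)) x H). Qed.

Lemma Tr_S (K : Type) (lt : K -> K -> Prop) (C : K -> K -> Prop) b g n :
  Tr lt C b g (S n) =
  (if excluded_middle_informative (lt b (Tr lt C b g n))
   then min_or lt b (fun x => C (Tr lt C b g n) x /\ le lt b x) else b).
Proof. reflexivity. Qed.

Lemma step_lt (K : Type) (lt : K -> K -> Prop) (W : strict_well_order lt)
  (C : K -> K -> Prop) (HC : C_sequence lt C) b t :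
  lt b t -> le lt b (min_or lt b (fun x => C t x /\ le lt b x)) /\
            lt (min_or lt b (fun x => C t x /\ le lt b x)) t.
Proof.
  intros Hbt. destruct (classic (exists x, C t x /\ le lt b x)) as [Hex|Hn].
  - destruct (min_or_spec W b Hex) as [[H1 H2] _]. split; auto. eapply C_lt; eauto.
  - rewrite min_or_empty; auto. split; auto. right; auto.
Qed.

Lemma Tr_ge1 (K : Type) (lt : K -> K -> Prop) (W : strict_well_order lt)
  (C : K -> K -> Prop) (HC : C_sequence lt C) b g n : le lt b (Tr lt C b g (S n)).
Proof.
  rewrite Tr_S. destruct (excluded_middle_informative _) as [h|h].
  - apply (step_lt W HC h).
  - right; auto.
Qed.

Lemma Tr_dec (K : Type) (lt : K -> K -> Prop) (W : strict_well_order lt)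
  (C : K -> K -> Prop) (HC : C_sequence lt C) b g n :
  lt b (Tr lt C b g n) -> lt (Tr lt C b g (S n)) (Tr lt C b g n).
Proof.
  intro h. rewrite Tr_S. destruct (excluded_middle_informative _) as [h'|h']; [|contradiction].
  apply (step_lt W HC h').
Qed.

Lemma Tr_shift (K : Type) (lt : K -> K -> Prop) (C : K -> K -> Prop) b g m n :
  Tr lt C b g (m + n) = Tr lt C b (Tr lt C b g m) n.
Proof.
  induction n as [|n IH].
  - rewrite Nat.add_0_r. reflexivity.
  - rewrite Nat.add_succ_r. rewrite !Tr_S. rewrite IH. reflexivity.
Qed.

Lemma Tr_reach (K : Type) (lt : K -> K -> Prop) (W : strict_well_order lt)
  (C : K -> K -> Prop) (HC : C_sequence lt C) b g : exists n, Tr lt C b g n = b.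
Proof.
  induction g as [g IH] using (well_founded_ind (W_wf W)).
  destruct (W_trich W b g) as [h|[h|h]].
  - assert (Hd : lt (Tr lt C b g 1) g) by (apply (Tr_dec W HC (n:=0)); exact h).
    destruct (IH _ Hd) as [n Hn]. exists (1 + n). rewrite Tr_shift. exact Hn.
  - exists 0. simpl. auto.
  - exists 1. rewrite Tr_S. simpl. destruct (excluded_middle_informative _) as [h'|h']; auto.
    exfalso. exact (W_asym W h h').
Qed.

Lemma rho2_spec (K : Type) (lt : K -> K -> Prop) (W : strict_well_order lt)
  (C : K -> K -> Prop) (HC : C_sequence lt C) b g :
  Tr lt C b g (rho2 lt C b g) = b /\ forall m, m < rho2 lt C b g -> Tr lt C b g m <> b.
Proof.
  unfold rho2. apply epsilon_spec.
  destruct (Tr_reach W HC b g) as [n Hn].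
  induction n as [n IH] using (well_founded_ind Nat.lt_wf_0).
  destruct (classic (exists m, m < n /\ Tr lt C b g m = b)) as [[m [Hm1 Hm2]]|Hno].
  - exact (IH m Hm1 Hm2).
  - exists n. split; auto. intros m Hm He. apply Hno. eauto.
Qed.

Lemma rho2_char (K : Type) (lt : K -> K -> Prop) (W : strict_well_order lt)
  (C : K -> K -> Prop) (HC : C_sequence lt C) b g l :
  Tr lt C b g l = b -> (forall m, m < l -> Tr lt C b g m <> b) -> rho2 lt C b g = l.
Proof.
  intros H1 H2. destruct (rho2_spec W HC b g) as [H3 H4].
  destruct (Nat.lt_trichotomy (rho2 lt C b g) l) as [h|[h|h]]; auto.
  - exfalso; exact (H2 _ h H3).
  - exfalso; exact (H4 _ h H1).
Qed.

Lemma rho0_len (K : Type) (lt : K -> K -> Prop) (C : K -> K -> Prop) b g :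
  length (rho0 lt C b g) = rho2 lt C b g.
Proof. unfold rho0. rewrite length_map, length_seq. reflexivity. Qed.

Lemma rho0_nth (K : Type) (lt : K -> K -> Prop) (C : K -> K -> Prop) b g i d :
  i < rho2 lt C b g ->
  nth i (rho0 lt C b g) d = otp lt b (fun x => C (Tr lt C b g i) x /\ lt x b).
Proof.
  intro Hi. unfold rho0.
  set (f := fun n => otp lt b (fun x => C (Tr lt C b g n) x /\ lt x b)).
  change (nth i (map f (seq 0 (rho2 lt C b g))) d = f i).
  rewrite nth_indep with (d' := f 0).
  - rewrite map_nth. rewrite seq_nth; auto.
  - rewrite length_map, length_seq. auto.
Qed.

Lemma map_seq_shift (A : Type) (f : nat -> A) k s r :
  map f (seq (k + s) r) = map (fun j => f (k + j)) (seq s r).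
Proof.
  revert s. induction r as [|r IH]; intro s; simpl; auto.
  f_equal. rewrite <- IH. f_equal. f_equal. lia.
Qed.
Definition bnd (K : Type) (lt : K -> K -> Prop) (C : K -> K -> Prop) (delta t eps : K) : Prop :=
  forall x, C t x -> lt eps x -> ~ lt x delta.
Definition unb (K : Type) (lt : K -> K -> Prop) (C : K -> K -> Prop) (delta t : K) : Prop :=
  forall eps, lt eps delta -> exists x, C t x /\ lt eps x /\ lt x delta.

Lemma bnd_or_unb (K : Type) (lt : K -> K -> Prop) (C : K -> K -> Prop) delta t :
  (exists eps, lt eps delta /\ bnd lt C delta t eps) \/ unb lt C delta t.
Proof.
  destruct (classic (unb lt C delta t)) as [h|h]; auto. left.
  apply NNPP. intro Hn. apply h. intros eps He. apply NNPP. intro Hn2. apply Hn.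
  exists eps. split; auto. intros x Hx Hex Hxd. apply Hn2. eauto.
Qed.

Lemma bnd_mono (K : Type) (lt : K -> K -> Prop) (W : strict_well_order lt) (C : K -> K -> Prop) delta t e e' :
  bnd lt C delta t e -> lt e e' -> bnd lt C delta t e'.
Proof. intros H h x Hx Hx'. apply H; auto. eapply W_trans; eauto. Qed.

Lemma unb_closed (K : Type) (lt : K -> K -> Prop) (C : K -> K -> Prop) (HC : C_sequence lt C) delta t :
  nonzero_limit lt delta -> lt delta t -> unb lt C delta t -> C t delta.
Proof.
  intros [[e He] _] Hdt Hu. destruct (proj1 (HC t)) as [_ Hcl]. apply Hcl; auto.
  destruct (Hu e He) as [x [h1 [_ h3]]]. eauto.
Qed.

Lemma unb_self (K : Type) (lt : K -> K -> Prop) (W : strict_well_order lt) (C : K -> K -> Prop)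
  (HC : C_sequence lt C) delta :
  nonzero_limit lt delta -> unb lt C delta delta.
Proof.
  intros [_ Hlim] e He. apply NNPP. intro Hn.
  destruct (proj2 (HC delta) e) as [Hs _].
  assert (Hub : forall x, C delta x -> le lt x e).
  { intros x Hx. destruct (W_trich W x e) as [h|[h|h]].
    - left; auto.
    - right; auto.
    - exfalso. apply Hn. exists x. split; auto. split; auto. eapply C_lt; eauto. }
  destruct (Hlim e He) as [eta [h1 h2]].
  destruct (Hs Hub eta h2) as [h|h].
  - exact (W_asym W h h1).
  - subst. exact (W_irr W h1).
Qed.

Lemma common_eps (K : Type) (lt : K -> K -> Prop) (W : strict_well_order lt) delta
  (Q : nat -> K -> Prop) :
  (forall i e e', Q i e -> lt e e' -> Q i e') -> (exists e, lt e delta) ->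
  forall n, (forall i, i < n -> exists e, lt e delta /\ Q i e) ->
  exists e, lt e delta /\ forall i, i < n -> Q i e.
Proof.
  intros Hmono Hne n. induction n as [|n IH]; intros H.
  - destruct Hne as [e He]. exists e. split; auto. intros; lia.
  - destruct IH as [e1 [He1 Q1]]. { intros i Hi. apply H. lia. }
    destruct (H n (Nat.lt_succ_diag_r n)) as [e2 [He2 Q2]].
    destruct (W_trich W e1 e2) as [h|[h|h]].
    + exists e2. split; auto. intros i Hi. destruct (Nat.eq_dec i n) as [->|hn]; auto.
      apply (Hmono i e1); auto. apply Q1. lia.
    + subst. exists e2. split; auto. intros i Hi. destruct (Nat.eq_dec i n) as [->|hn]; auto.
      apply Q1. lia.
    + exists e1. split; auto. intros i Hi. destruct (Nat.eq_dec i n) as [->|hn]; auto.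
      apply (Hmono n e2); auto. apply Q1. lia.
Qed.

Lemma bnd_sets (K : Type) (lt : K -> K -> Prop) (W : strict_well_order lt) (C : K -> K -> Prop) delta t e xi :
  bnd lt C delta t e -> lt e xi -> lt xi delta ->
  forall x, (C t x /\ lt x xi) <-> (C t x /\ lt x delta).
Proof.
  intros Hb h1 h2 x. split; intros [hx hy]; split; auto.
  - eapply W_trans; eauto.
  - destruct (W_trich W x xi) as [h|[h|h]]; auto.
    + subst. exfalso. exact (Hb _ hx h1 hy).
    + exfalso. exact (Hb _ hx (W_trans W h1 h) hy).
Qed.

Lemma bnd_otp (K : Type) (lt : K -> K -> Prop) (W : strict_well_order lt) (Hcard : is_cardinal lt)
  (C : K -> K -> Prop) delta t e xi :
  bnd lt C delta t e -> lt e xi -> lt xi delta ->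
  otp lt xi (fun x => C t x /\ lt x xi) = otp lt delta (fun x => C t x /\ lt x delta).
Proof.
  intros Hb h1 h2. apply (otp_eq W Hcard (delta := xi)).
  - intros x [_ h]; auto.
  - apply (bnd_sets W Hb h1 h2).
Qed.

Lemma walk_gt (K : Type) (lt : K -> K -> Prop) (W : strict_well_order lt)
  (C : K -> K -> Prop) (HC : C_sequence lt C) delta g :
  lt delta g -> forall i, i < rho2 lt C delta g -> lt delta (Tr lt C delta g i).
Proof.
  intros Hg i Hi. destruct (rho2_spec W HC delta g) as [_ H].
  specialize (H i Hi). destruct i as [|i].
  - exact Hg.
  - destruct (Tr_ge1 W HC delta g i) as [h|h]; auto. exfalso; auto.
Qed.

Lemma walk_prefix (K : Type) (lt : K -> K -> Prop) (W : strict_well_order lt)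
  (C : K -> K -> Prop) (HC : C_sequence lt C) delta g e xi :
  lt delta g ->
  (forall i, S i < rho2 lt C delta g -> bnd lt C delta (Tr lt C delta g i) e) ->
  lt e xi -> lt xi delta ->
  forall i, i < rho2 lt C delta g -> Tr lt C xi g i = Tr lt C delta g i.
Proof.
  intros Hg Hb h1 h2 i. induction i as [|i IH]; intros Hi; [reflexivity|].
  pose proof (walk_gt W HC Hg Hi) as HgtS.
  assert (Hi' : i < rho2 lt C delta g) by lia.
  pose proof (walk_gt W HC Hg Hi') as Hgt.
  rewrite !Tr_S. rewrite (IH Hi').
  destruct (excluded_middle_informative (lt xi (Tr lt C delta g i))) as [a1|a1];
  [|exfalso; apply a1; eapply W_trans; eauto].
  destruct (excluded_middle_informative (lt delta (Tr lt C delta g i))) as [a2|a2]; [|contradiction].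
  rewrite Tr_S in HgtS.
  destruct (excluded_middle_informative (lt delta (Tr lt C delta g i))) as [_|a3]; [|contradiction].
  apply min_or_ext; auto.
  - intros x. split; intros [hx hy]; split; auto.
    + destruct hy as [hy|hy].
      * destruct (W_trich W x delta) as [h|[h|h]].
        -- exfalso. exact (Hb i Hi x hx (W_trans W h1 hy) h).
        -- right; auto.
        -- left; auto.
      * rewrite <- hy in hx. exfalso. exact (Hb i Hi xi hx h1 h2).
    + left. destruct hy as [hy|hy]; [exact (W_trans W h2 hy)| rewrite <- hy; exact h2].
  - apply NNPP. intro Hn. rewrite min_or_empty in HgtS.
    + exact (W_irr W HgtS).
    + intros [x [hx hy]]. apply Hn. exists x. split; auto.
      left. destruct hy as [hy|hy]; [exact (W_trans W h2 hy)| rewrite <- hy; exact h2].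
Qed.
Definition shape (K : Type) (lt : K -> K -> Prop) (C : K -> K -> Prop) (delta g e : K) : Prop :=
  (forall xi, lt e xi -> lt xi delta -> rho0 lt C xi g = rho0 lt C delta g) \/
  (forall xi, lt e xi -> lt xi delta -> rho0 lt C xi g = rho0 lt C delta g ++ rho0 lt C xi delta) \/
  (exists a k, lt delta a /\ unb lt C delta a /\ rho2 lt C delta g = S k /\
     nth k (rho0 lt C delta g) delta = otp lt delta (fun x => C a x /\ lt x delta) /\
     forall xi, lt e xi -> lt xi delta ->
       (C a xi -> rho2 lt C xi g = S k /\
          (forall i, i < k -> nth i (rho0 lt C xi g) delta = nth i (rho0 lt C delta g) delta) /\
          nth k (rho0 lt C xi g) delta = otp lt xi (fun x => C a x /\ lt x xi)) /\
       (~ C a xi -> S k < rho2 lt C xi g)).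

Lemma ne_of_lt (K : Type) (lt : K -> K -> Prop) (W : strict_well_order lt) a b c :
  lt a b -> lt c a -> b <> c.
Proof. intros h1 h2 e. subst. exact (W_asym W h1 h2). Qed.

Lemma shape_exists (K : Type) (lt : K -> K -> Prop) (W : strict_well_order lt) (Hcard : is_cardinal lt)
  (C : K -> K -> Prop) (HC : C_sequence lt C) delta g :
  nonzero_limit lt delta -> lt delta g -> exists e, lt e delta /\ shape lt C delta g e.
Proof.
  intros Hnz Hg.
  destruct (rho2_spec W HC delta g) as [Hend Hne].
  remember (rho2 lt C delta g) as k eqn:Hk.
  destruct k as [|k'].
  { exfalso. simpl in Hend. subst. exact (W_irr W Hg). }
  set (a := Tr lt C delta g k').
  assert (Hgt : forall i, i < S k' -> lt delta (Tr lt C delta g i)).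
  { intros i Hi. apply (walk_gt W HC Hg). lia. }
  assert (Ha : lt delta a) by (apply Hgt; lia).
  assert (Hstep : min_or lt delta (fun x => C a x /\ le lt delta x) = delta).
  { rewrite Tr_S in Hend. fold a in Hend.
    destruct (excluded_middle_informative (lt delta a)) as [_|n]; [exact Hend|contradiction]. }
  assert (Hb : forall i, S i < S k' -> exists e, lt e delta /\ bnd lt C delta (Tr lt C delta g i) e).
  { intros i Hi. destruct (bnd_or_unb lt C delta (Tr lt C delta g i)) as [h|h]; auto.
    exfalso. assert (Hc : C (Tr lt C delta g i) delta).
    { apply (unb_closed HC Hnz); auto. apply Hgt. lia. }
    apply (Hne (S i) Hi). rewrite Tr_S.
    destruct (excluded_middle_informative _) as [h'|h'].
    - apply (min_or_eq W).
      + split; auto. right; auto.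
      + intros x [_ hx] hlt. destruct hx as [hx|hx]; [exact (W_asym W hx hlt)|subst; exact (W_irr W hlt)].
    - exfalso; apply h'. apply Hgt. lia. }
  assert (Hne2 : exists e, lt e delta) by (destruct Hnz as [h _]; exact h).
  assert (Hmono : forall i e e', bnd lt C delta (Tr lt C delta g i) e -> lt e e' -> bnd lt C delta (Tr lt C delta g i) e').
  { intros i e e' h h'. eapply bnd_mono; eauto. }
  assert (Hnotxi : forall xi i, lt xi delta -> i < S k' -> Tr lt C delta g i <> xi).
  { intros xi i h hi. apply (ne_of_lt W (a:=delta)); auto. }
  destruct (bnd_or_unb lt C delta a) as [[ea [Hea Hba]]|Hua].
  -
    destruct (@common_eps _ _ W delta (fun i e => bnd lt C delta (Tr lt C delta g i) e) Hmono Hne2 (S k'))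
      as [e [He Hbe]].
    { intros i Hi. destruct (Nat.eq_dec i k') as [->|hn]; [exists ea; auto|]. apply Hb. lia. }
    exists e. split; auto.
    assert (Hpre : forall xi, lt e xi -> lt xi delta -> forall i, i < S k' -> Tr lt C xi g i = Tr lt C delta g i).
    { intros xi h1 h2. rewrite Hk. apply (walk_prefix W HC (e:=e) Hg); auto. intros i Hi. apply Hbe. lia. }
    assert (Hfirst : forall xi, lt e xi -> lt xi delta ->
      map (fun n => otp lt xi (fun x => C (Tr lt C xi g n) x /\ lt x xi)) (seq 0 (S k')) = rho0 lt C delta g).
    { intros xi h1 h2. unfold rho0. rewrite <- Hk. apply map_ext_in. intros n Hn.
      apply in_seq in Hn. rewrite (Hpre xi h1 h2 n ltac:(lia)).
      apply (bnd_otp W Hcard (e:=e)); auto. apply Hbe; lia. }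
    assert (HTk : forall xi, lt e xi -> lt xi delta ->
       Tr lt C xi g (S k') = min_or lt xi (fun x => C a x /\ le lt xi x)).
    { intros xi h1 h2. rewrite Tr_S. rewrite (Hpre xi h1 h2 k' ltac:(lia)). fold a.
      destruct (excluded_middle_informative _) as [_|n]; auto.
      exfalso; apply n. eapply W_trans; eauto. }
    destruct (classic (C a delta)) as [Hcd|Hncd].
    +
      right; left. intros xi h1 h2.
      assert (HT : Tr lt C xi g (S k') = delta).
      { rewrite (HTk xi h1 h2). apply (min_or_eq W).
        - split; auto. left; auto.
        - intros x [hx1 hx2] hlt. apply (Hbe k' ltac:(lia) x hx1); auto.
          destruct hx2 as [hx2|hx2]; [eapply W_trans; eauto| subst; auto]. }
      destruct (rho2_spec W HC xi delta) as [Hend' Hne'].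
      assert (Hr : rho2 lt C xi g = S k' + rho2 lt C xi delta).
      { apply (rho2_char W HC).
        - rewrite Tr_shift, HT. exact Hend'.
        - intros m Hm. destruct (Nat.lt_ge_cases m (S k')) as [hm|hm].
          + rewrite (Hpre xi h1 h2 m hm). apply Hnotxi; auto.
          + replace m with (S k' + (m - S k')) by lia. rewrite Tr_shift, HT.
            apply Hne'. lia. }
      unfold rho0 at 1. rewrite Hr, seq_app, map_app.
      rewrite (Hfirst xi h1 h2). f_equal.
      replace (0 + S k') with (S k' + 0) by lia. rewrite map_seq_shift.
      unfold rho0. apply map_ext. intro j. rewrite Tr_shift, HT. reflexivity.
    +
      left. intros xi h1 h2.
      assert (Hempty : ~ exists x, C a x /\ le lt delta x).
      { intros Hex. apply Hncd. destruct (min_or_spec W delta Hex) as [[H1 _] _].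
        rewrite Hstep in H1. exact H1. }
      assert (HT : Tr lt C xi g (S k') = xi).
      { rewrite (HTk xi h1 h2). apply min_or_empty. intros [x [hx1 hx2]].
        apply Hempty. exists x. split; auto.
        destruct (W_trich W x delta) as [h|[h|h]].
        - exfalso. apply (Hbe k' ltac:(lia) x hx1); auto.
          destruct hx2 as [hx2|hx2]; [eapply W_trans; eauto| subst; auto].
        - right; auto.
        - left; auto. }
      assert (Hr : rho2 lt C xi g = S k').
      { apply (rho2_char W HC); auto.
        intros m Hm. rewrite (Hpre xi h1 h2 m Hm). apply Hnotxi; auto. }
      unfold rho0 at 1. rewrite Hr. apply Hfirst; auto.
  -
    destruct (@common_eps _ _ W delta (fun i e => bnd lt C delta (Tr lt C delta g i) e) Hmono Hne2 k')
      as [e [He Hbe]].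
    { intros i Hi. apply Hb. lia. }
    exists e. split; auto. right; right.
    assert (Hpre : forall xi, lt e xi -> lt xi delta -> forall i, i < S k' -> Tr lt C xi g i = Tr lt C delta g i).
    { intros xi h1 h2. rewrite Hk. apply (walk_prefix W HC (e:=e) Hg); auto. intros i Hi. apply Hbe. lia. }
    assert (HTk : forall xi, lt e xi -> lt xi delta ->
       Tr lt C xi g (S k') = min_or lt xi (fun x => C a x /\ le lt xi x)).
    { intros xi h1 h2. rewrite Tr_S. rewrite (Hpre xi h1 h2 k' ltac:(lia)). fold a.
      destruct (excluded_middle_informative _) as [_|n]; auto.
      exfalso; apply n. eapply W_trans; eauto. }
    exists a, k'. split; auto. split; auto. split; auto. split.
    { rewrite rho0_nth; [reflexivity|lia]. }
    intros xi h1 h2. split.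
    + intros Hca.
      assert (HT : Tr lt C xi g (S k') = xi).
      { rewrite (HTk xi h1 h2). apply (min_or_eq W).
        - split; auto. right; auto.
        - intros x [_ hx] hlt. destruct hx as [hx|hx]; [exact (W_asym W hx hlt)|subst; exact (W_irr W hlt)]. }
      assert (Hr : rho2 lt C xi g = S k').
      { apply (rho2_char W HC); auto.
        intros m Hm. rewrite (Hpre xi h1 h2 m Hm). apply Hnotxi; auto. }
      split; auto. split.
      * intros i Hi. rewrite !rho0_nth; try lia.
        rewrite (Hpre xi h1 h2 i ltac:(lia)). apply (bnd_otp W Hcard (e:=e)); auto.
      * rewrite rho0_nth; [|lia]. rewrite (Hpre xi h1 h2 k' ltac:(lia)). reflexivity.
    + intros Hnca.
      assert (HT : Tr lt C xi g (S k') <> xi).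
      { rewrite (HTk xi h1 h2).
        destruct (Hua xi h2) as [x [hx1 [hx2 hx3]]].
        assert (Hex : exists x, C a x /\ le lt xi x) by (exists x; split; auto; left; auto).
        destruct (min_or_spec W xi Hex) as [[H1 _] _]. intro E. rewrite E in H1. contradiction. }
      destruct (rho2_spec W HC xi g) as [Hend' _].
      destruct (Nat.lt_trichotomy (rho2 lt C xi g) (S k')) as [h|[h|h]]; auto.
      * exfalso. rewrite (Hpre xi h1 h2 _ h) in Hend'. exact (Hnotxi xi _ h2 h Hend').
      * exfalso. rewrite h in Hend'. contradiction.
Qed.
Lemma shape_mono (K : Type) (lt : K -> K -> Prop) (W : strict_well_order lt)
  (C : K -> K -> Prop) delta g e e' :
  shape lt C delta g e -> lt e e' -> shape lt C delta g e'.
Proof.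
  intros S h. destruct S as [S|[S|[a [k [S1 [S2 [S3 [S4 S5]]]]]]]].
  - left. intros xi h1 h2. apply S; auto. eapply W_trans; eauto.
  - right; left. intros xi h1 h2. apply S; auto. eapply W_trans; eauto.
  - right; right. exists a, k. repeat (split; auto).
    all: intros; apply S5; auto; eapply W_trans; eauto.
Qed.

Lemma D1 (K : Type) (lt : K -> K -> Prop) (W : strict_well_order lt)
  (C : K -> K -> Prop) (HC : C_sequence lt C) delta xi :
  lt xi delta -> C delta xi -> rho0 lt C xi delta = [otp lt xi (fun x => C delta x /\ lt x xi)].
Proof.
  intros h Hc.
  assert (Hr : rho2 lt C xi delta = 1).
  { apply (rho2_char W HC).
    - rewrite Tr_S. simpl. destruct (excluded_middle_informative (lt xi delta)) as [_|n]; [|contradiction].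
      apply (min_or_eq W).
      + split; auto. right; auto.
      + intros x [_ hx] hlt. destruct hx as [hx|hx]; [exact (W_asym W hx hlt)|subst; exact (W_irr W hlt)].
    - intros m Hm. assert (m = 0) as -> by lia. simpl. intro E. subst. exact (W_irr W h). }
  unfold rho0. rewrite Hr. reflexivity.
Qed.

Lemma D2 (K : Type) (lt : K -> K -> Prop) (W : strict_well_order lt)
  (C : K -> K -> Prop) (HC : C_sequence lt C) delta xi :
  nonzero_limit lt delta -> lt xi delta -> ~ C delta xi -> 2 <= rho2 lt C xi delta.
Proof.
  intros Hnz h Hc. destruct (rho2_spec W HC xi delta) as [Hend _].
  destruct (rho2 lt C xi delta) as [|[|r]] eqn:E; try lia.
  - simpl in Hend. subst. exfalso; exact (W_irr W h).
  - exfalso. rewrite Tr_S in Hend. simpl in Hend.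
    destruct (excluded_middle_informative (lt xi delta)) as [_|n]; [|contradiction].
    destruct (unb_self W HC Hnz h) as [x [hx1 [hx2 hx3]]].
    assert (Hex : exists x, C delta x /\ le lt xi x) by (exists x; split; auto; left; auto).
    destruct (min_or_spec W xi Hex) as [[H1 _] _]. rewrite Hend in H1. contradiction.
Qed.

Lemma rho2_pos (K : Type) (lt : K -> K -> Prop) (W : strict_well_order lt)
  (C : K -> K -> Prop) (HC : C_sequence lt C) delta xi :
  lt xi delta -> 1 <= rho2 lt C xi delta.
Proof.
  intros h. destruct (rho2_spec W HC xi delta) as [Hend _].
  destruct (rho2 lt C xi delta) eqn:E; try lia.
  simpl in Hend. subst. exfalso; exact (W_irr W h).
Qed.

Lemma two_pts (K : Type) (lt : K -> K -> Prop) (C : K -> K -> Prop) delta t e :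
  unb lt C delta t -> lt e delta ->
  exists x1 x2, C t x1 /\ C t x2 /\ lt e x1 /\ lt x1 x2 /\ lt x2 delta.
Proof.
  intros Hu he. destruct (Hu e he) as [x1 [h1 [h2 h3]]].
  destruct (Hu x1 h3) as [x2 [g1 [g2 g3]]]. exists x1, x2. auto 6.
Qed.

Lemma combine (K : Type) (lt : K -> K -> Prop) (W : strict_well_order lt) (Hcard : is_cardinal lt)
  (C : K -> K -> Prop) (HC : C_sequence lt C) delta g1 g2 e :
  in_V lt C delta -> lt e delta ->
  (forall xi, lt e xi -> lt xi delta -> rho0 lt C xi g1 = rho0 lt C xi g2) ->
  rho0 lt C delta g1 <> rho0 lt C delta g2 ->
  shape lt C delta g1 e -> shape lt C delta g2 e -> False.
Proof.
  intros [Hnz HV] He Heq Hneq S1 S2.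
  assert (Htail : exists xi, lt e xi /\ lt xi delta).
  { destruct Hnz as [_ Hl]. apply Hl; auto. }
  assert (Hd := unb_self W HC Hnz).
  assert (c_i : forall h1 h2, (forall xi, lt e xi -> lt xi delta -> rho0 lt C xi h1 = rho0 lt C xi h2) ->
      rho0 lt C delta h1 <> rho0 lt C delta h2 ->
      (forall xi, lt e xi -> lt xi delta -> rho0 lt C xi h1 = rho0 lt C delta h1) ->
      (forall xi, lt e xi -> lt xi delta -> rho0 lt C xi h2 = rho0 lt C delta h2) -> False).
  { intros h1 h2 E N A B. destruct Htail as [xi [t1 t2]]. apply N.
    rewrite <- (A xi t1 t2), <- (B xi t1 t2). auto. }
  assert (c_ii : forall h1 h2, (forall xi, lt e xi -> lt xi delta -> rho0 lt C xi h1 = rho0 lt C xi h2) ->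
      (forall xi, lt e xi -> lt xi delta -> rho0 lt C xi h1 = rho0 lt C delta h1) ->
      (forall xi, lt e xi -> lt xi delta -> rho0 lt C xi h2 = rho0 lt C delta h2 ++ rho0 lt C xi delta) -> False).
  { intros h1 h2 E A B. destruct (two_pts Hd He) as [x1 [x2 [k1 [k2 [k3 [k4 k5]]]]]].
    assert (t2 : lt e x2) by (eapply W_trans; eauto).
    assert (t1' : lt x1 delta) by (eapply W_trans; eauto).
    pose proof (E x1 k3 t1') as E1. pose proof (E x2 t2 k5) as E2.
    rewrite A, B in E1 by auto. rewrite A, B in E2 by auto. rewrite E1 in E2.
    apply app_inv_head in E2. rewrite !(D1 W HC) in E2 by auto. injection E2. intro E3.
    exact (otp_distinct W Hcard k1 k2 k4 E3). }
  assert (c_iii : forall h1 h2, (forall xi, lt e xi -> lt xi delta -> rho0 lt C xi h1 = rho0 lt C xi h2) ->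
      (exists a k, lt delta a /\ unb lt C delta a /\ rho2 lt C delta h1 = S k /\
        nth k (rho0 lt C delta h1) delta = otp lt delta (fun x => C a x /\ lt x delta) /\
        forall xi, lt e xi -> lt xi delta ->
          (C a xi -> rho2 lt C xi h1 = S k /\
            (forall i, i < k -> nth i (rho0 lt C xi h1) delta = nth i (rho0 lt C delta h1) delta) /\
            nth k (rho0 lt C xi h1) delta = otp lt xi (fun x => C a x /\ lt x xi)) /\
          (~ C a xi -> S k < rho2 lt C xi h1)) ->
      (forall xi, lt e xi -> lt xi delta -> rho0 lt C xi h2 = rho0 lt C delta h2) -> False).
  { intros h1 h2 E [a [k [B1 [B2 [B3 [B4 B5]]]]]] A.
    destruct (two_pts B2 He) as [x1 [x2 [k1 [k2 [k3 [k4 k5]]]]]].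
    assert (t2 : lt e x2) by (eapply W_trans; eauto).
    assert (t1' : lt x1 delta) by (eapply W_trans; eauto).
    destruct (proj1 (B5 x1 k3 t1') k1) as [_ [_ N1]].
    destruct (proj1 (B5 x2 t2 k5) k2) as [_ [_ N2]].
    assert (E12 : rho0 lt C x1 h1 = rho0 lt C x2 h1).
    { rewrite (E x1), (E x2), (A x1), (A x2); auto. }
    rewrite E12, N2 in N1. exact (otp_distinct W Hcard k1 k2 k4 (eq_sym N1)). }
  assert (c_iv : forall h1 h2, (forall xi, lt e xi -> lt xi delta -> rho0 lt C xi h1 = rho0 lt C xi h2) ->
      (exists a k, lt delta a /\ unb lt C delta a /\ rho2 lt C delta h1 = S k /\
        nth k (rho0 lt C delta h1) delta = otp lt delta (fun x => C a x /\ lt x delta) /\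
        forall xi, lt e xi -> lt xi delta ->
          (C a xi -> rho2 lt C xi h1 = S k /\
            (forall i, i < k -> nth i (rho0 lt C xi h1) delta = nth i (rho0 lt C delta h1) delta) /\
            nth k (rho0 lt C xi h1) delta = otp lt xi (fun x => C a x /\ lt x xi)) /\
          (~ C a xi -> S k < rho2 lt C xi h1)) ->
      (forall xi, lt e xi -> lt xi delta -> rho0 lt C xi h2 = rho0 lt C delta h2 ++ rho0 lt C xi delta) -> False).
  { intros h1 h2 E [a [k [B1 [B2 [B3 [B4 B5]]]]]] A.
    set (l := rho2 lt C delta h2).
    assert (L : forall xi, lt e xi -> lt xi delta -> rho2 lt C xi h1 = l + rho2 lt C xi delta).
    { intros xi t1 t2. rewrite <- !rho0_len. rewrite (E xi t1 t2), (A xi t1 t2), length_app, rho0_len. reflexivity. }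
    destruct (B2 e He) as [x0 [k0 [k0' k0'']]].
    destruct (proj1 (B5 x0 k0' k0'') k0) as [R0 _].
    pose proof (L x0 k0' k0'') as L0. pose proof (rho2_pos W HC k0'') as P0.
    destruct (Hd e He) as [x1 [j1 [j1' j1'']]].
    assert (R1 : rho2 lt C x1 delta = 1).
    { rewrite <- rho0_len, (D1 W HC j1'' j1). reflexivity. }
    pose proof (L x1 j1' j1'') as L1.
    assert (Hk : S k = l + 1).
    { destruct (classic (C a x1)) as [c|c].
      - destruct (proj1 (B5 x1 j1' j1'') c) as [R _]. lia.
      - pose proof (proj2 (B5 x1 j1' j1'') c). lia. }
    destruct (proj2 Hnz e He) as [eta [q1 q2]].
    apply (HV a B1 eta q2). intros x hx1 hx2.
    assert (t1 : lt e x) by (destruct hx1 as [hx1|hx1]; [eapply W_trans; eauto| subst; auto]).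
    pose proof (L x t1 hx2) as Lx.
    split; intro c.
    - apply NNPP. intro c'. pose proof (proj2 (B5 x t1 hx2) c').
      assert (rho2 lt C x delta = 1) by (rewrite <- rho0_len, (D1 W HC hx2 c); reflexivity). lia.
    - destruct (proj1 (B5 x t1 hx2) c) as [R _].
      apply NNPP. intro c'. pose proof (D2 W HC Hnz hx2 c'). lia. }
  assert (c_vi : forall h1 h2, (forall xi, lt e xi -> lt xi delta -> rho0 lt C xi h1 = rho0 lt C xi h2) ->
      rho0 lt C delta h1 <> rho0 lt C delta h2 ->
      (exists a k, lt delta a /\ unb lt C delta a /\ rho2 lt C delta h1 = S k /\
        nth k (rho0 lt C delta h1) delta = otp lt delta (fun x => C a x /\ lt x delta) /\
        forall xi, lt e xi -> lt xi delta ->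
          (C a xi -> rho2 lt C xi h1 = S k /\
            (forall i, i < k -> nth i (rho0 lt C xi h1) delta = nth i (rho0 lt C delta h1) delta) /\
            nth k (rho0 lt C xi h1) delta = otp lt xi (fun x => C a x /\ lt x xi)) /\
          (~ C a xi -> S k < rho2 lt C xi h1)) ->
      (exists a k, lt delta a /\ unb lt C delta a /\ rho2 lt C delta h2 = S k /\
        nth k (rho0 lt C delta h2) delta = otp lt delta (fun x => C a x /\ lt x delta) /\
        forall xi, lt e xi -> lt xi delta ->
          (C a xi -> rho2 lt C xi h2 = S k /\
            (forall i, i < k -> nth i (rho0 lt C xi h2) delta = nth i (rho0 lt C delta h2) delta) /\
            nth k (rho0 lt C xi h2) delta = otp lt xi (fun x => C a x /\ lt x xi)) /\
          (~ C a xi -> S k < rho2 lt C xi h2)) -> False).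
  { intros h1 h2 E N [a [k [B1 [B2 [B3 [B4 B5]]]]]] [a' [k' [B1' [B2' [B3' [B4' B5']]]]]].
    assert (EL : forall xi, lt e xi -> lt xi delta -> rho2 lt C xi h1 = rho2 lt C xi h2).
    { intros xi t1 t2. rewrite <- !rho0_len, (E xi t1 t2). reflexivity. }
    destruct (B2 e He) as [x0 [k0 [k0' k0'']]].
    destruct (B2' e He) as [y0 [m0 [m0' m0'']]].
    assert (Kle : k' <= k).
    { destruct (proj1 (B5 x0 k0' k0'') k0) as [R _]. pose proof (EL x0 k0' k0'').
      destruct (classic (C a' x0)) as [c|c].
      - destruct (proj1 (B5' x0 k0' k0'') c) as [R' _]. lia.
      - pose proof (proj2 (B5' x0 k0' k0'') c). lia. }
    assert (Kge : k <= k').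
    { destruct (proj1 (B5' y0 m0' m0'') m0) as [R _]. pose proof (EL y0 m0' m0'').
      destruct (classic (C a y0)) as [c|c].
      - destruct (proj1 (B5 y0 m0' m0'') c) as [R' _]. lia.
      - pose proof (proj2 (B5 y0 m0' m0'') c). lia. }
    assert (k' = k) by lia. subst k'.
    assert (Ag : forall x, lt e x -> lt x delta -> (C a x <-> C a' x)).
    { intros x t1 t2. pose proof (EL x t1 t2). split; intro c.
      - destruct (proj1 (B5 x t1 t2) c) as [R _]. apply NNPP; intro c'.
        pose proof (proj2 (B5' x t1 t2) c'). lia.
      - destruct (proj1 (B5' x t1 t2) c) as [R _]. apply NNPP; intro c'.
        pose proof (proj2 (B5 x t1 t2) c'). lia. }
    assert (k0a : C a' x0) by (apply Ag; auto).
    destruct (proj1 (B5 x0 k0' k0'') k0) as [_ [Q1 Q2]].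
    destruct (proj1 (B5' x0 k0' k0'') k0a) as [_ [Q1' Q2']].
    apply N. apply (nth_ext _ _ delta delta).
    - rewrite !rho0_len. congruence.
    - intros n Hn. rewrite rho0_len, B3 in Hn.
      destruct (Nat.lt_ge_cases n k) as [hn|hn].
      + rewrite <- (Q1 n hn), <- (Q1' n hn), (E x0 k0' k0''). reflexivity.
      + assert (n = k) as -> by lia. rewrite B4, B4'.
        apply (@otp_tail _ _ W Hcard (fun x => C a x /\ lt x delta) (fun x => C a' x /\ lt x delta)
                 delta x0 x0 x0).
        * intros x [_ h]; auto.
        * intros x [_ h]; auto.
        * split; auto.
        * split; auto.
        * intros x hx.
          assert (tx : lt e x).
          { destruct (W_trich W x x0) as [h|[h|h]]; [contradiction| rewrite h; exact k0'| exact (W_trans W k0' h)]. }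
          split; intros [c1 c2]; split; auto.
          -- apply (proj1 (Ag x tx c2)); auto.
          -- apply (proj2 (Ag x tx c2)); auto.
        * transitivity (otp lt x0 (fun x => C a x /\ lt x x0)).
          { apply (otp_eq W Hcard (delta := x0)).
            - intros x [_ h]; auto.
            - intros x. split; [intros [[c1 _] c2]; split; auto|
                 intros [c1 c2]; split; auto; split; auto; eapply W_trans; eauto]. }
          rewrite <- Q2, (E x0 k0' k0''), Q2'.
          apply (otp_eq W Hcard (delta := x0)).
          -- intros x [_ h]; auto.
          -- intros x. split; [intros [c1 c2]; split; auto; split; auto; eapply W_trans; eauto|
                 intros [[c1 _] c2]; split; auto]. }
  assert (c_v : (forall xi, lt e xi -> lt xi delta -> rho0 lt C xi g1 = rho0 lt C delta g1 ++ rho0 lt C xi delta) ->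
      (forall xi, lt e xi -> lt xi delta -> rho0 lt C xi g2 = rho0 lt C delta g2 ++ rho0 lt C xi delta) -> False).
  { intros A B. destruct Htail as [xi [t1 t2]]. apply Hneq.
    pose proof (Heq xi t1 t2) as E. rewrite A, B in E by auto. apply app_inv_tail in E. exact E. }
  assert (Heq' : forall xi, lt e xi -> lt xi delta -> rho0 lt C xi g2 = rho0 lt C xi g1)
    by (intros; symmetry; auto).
  assert (Hneq' : rho0 lt C delta g2 <> rho0 lt C delta g1) by (intro; apply Hneq; auto).
  destruct S1 as [A1|[A1|B1]]; destruct S2 as [A2|[A2|B2]].
  - exact (c_i _ _ Heq Hneq A1 A2).
  - exact (c_ii _ _ Heq A1 A2).
  - exact (c_iii _ _ Heq' B2 A1).
  - exact (c_ii _ _ Heq' A2 A1).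
  - exact (c_v A1 A2).
  - exact (c_iv _ _ Heq' B2 A1).
  - exact (c_iii _ _ Heq B1 A2).
  - exact (c_iv _ _ Heq B1 A2).
  - exact (c_vi _ _ Heq Hneq B1 B2).
Qed.
Unset Implicit Arguments.
Set Strict Implicit.
Theorem lemma5p1 (K : Type) (lt : K -> K -> Prop)
  (Hkappa : regular_uncountable_cardinal lt)
  (C : K -> K -> Prop) (HC : C_sequence lt C)
  (alpha beta : K) (Hab : lt alpha beta)
  (Hinc1 : ~ fun_subset lt alpha (rho0_fiber lt C alpha) beta (rho0_fiber lt C beta))
  (Hinc2 : ~ fun_subset lt beta (rho0_fiber lt C beta) alpha (rho0_fiber lt C alpha)) :
  ~ in_V lt C (Delta lt alpha (rho0_fiber lt C alpha) beta (rho0_fiber lt C beta)).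
Proof.
  destruct Hkappa as [W [Hcard _]].
  assert (Hex : exists xi, lt xi alpha /\ rho0 lt C xi alpha <> rho0 lt C xi beta).
  { apply NNPP. intro Hn. apply Hinc1. intros xi Hxi. split.
    - eapply W_trans; eauto.
    - apply NNPP. intro Hd. apply Hn. exists xi. split; auto. }
  destruct Hex as [xi0 [Hxi0 Hd0]].
  unfold Delta, rho0_fiber.
  set (P := fun x => x = alpha \/ x = beta \/ (lt x alpha /\ lt x beta /\ rho0 lt C x alpha <> rho0 lt C x beta)).
  assert (HexP : exists x, P x) by (exists alpha; left; auto).
  destruct (min_or_spec W alpha HexP) as [Hm Hmin].
  set (d := min_or lt alpha P) in *. clearbody d.
  assert (Hxi0P : P xi0) by (right; right; split; auto; split; auto; eapply W_trans; eauto).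
  assert (Hd : lt d alpha /\ lt d beta /\ rho0 lt C d alpha <> rho0 lt C d beta).
  { destruct Hm as [E|[E|H]]; auto.
    - exfalso. apply (Hmin xi0 Hxi0P). rewrite E. auto.
    - exfalso. apply (Hmin xi0 Hxi0P). rewrite E. eapply W_trans; eauto. }
  destruct Hd as [Hda [Hdb Hdne]].
  assert (Hbelow : forall xi, lt xi d -> rho0 lt C xi alpha = rho0 lt C xi beta).
  { intros xi Hxi. apply NNPP. intro Hn. apply (Hmin xi); auto.
    right; right. split; [|split]; auto; eapply W_trans; eauto. }
  intro HV. pose proof HV as [Hnz _].
  destruct (shape_exists W Hcard HC Hnz Hda) as [e1 [He1 S1]].
  destruct (shape_exists W Hcard HC Hnz Hdb) as [e2 [He2 S2]].
  destruct (W_trich W e1 e2) as [h|[h|h]].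
  - apply (combine W Hcard HC (g1:=alpha) (g2:=beta) HV He2).
    + intros xi _ h2. apply Hbelow; auto.
    + exact Hdne.
    + apply (shape_mono W S1 h).
    + exact S2.
  - subst. apply (combine W Hcard HC (g1:=alpha) (g2:=beta) HV He2); auto.
  - apply (combine W Hcard HC (g1:=alpha) (g2:=beta) HV He1); auto.
    apply (shape_mono W S2 h).
Qed.
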